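(* Let $0<a,b<1$, $f\ge3$, and let $w^*_n,q^*_n,\overline w_{m,n},\overline q_n$ be as in the context. Define $[w^*(a),q^*(a)]_n:=w^*_n(a)q^*_{n+1}(a)-q^*_n(a)w^*_{n+1}(a)$ and $[\overline w,\overline q]_n:=\overline w_{n,0}\overline q_{n+1}-\overline q_n\overline w_{n+1,0}$ for $n\ge1$. Then: 1. $[w^*(a),q^*(a)]_n=a^2z^2x_a^{\,n-1}$ for all $n\ge1$; 2. $[\overline w,\overline q]_{f-1}=\frac{1-b}{1-a}[w^*(a),q^*(a)]_{f-1}=\frac{1-b}{1-a}a^2z^2x_a^{\,f-2}$; 3. $[\overline w,\overline q]_{f+j-1}=\frac{1-b}{1-a}a^2z^2x_a^{\,f-2}x(a,b)x_b^{\,j-1}$ for all $j\ge1$.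
   Context: Let $r,y,z$ be indeterminates. For $c\in(0,1)$: $\omega_c:=1-(1-c)^2r^2y^2z^2$, $\tau_c:=1+(1-c)^2r^2z^2y(1-y)$, $x_c:=c^2z^2\tau_c^2$, $\beta_c:=1+z^2(c^2-(1-c)^2r^2(y^2+c^2(1-y)^2z^2))$; $w^*_0(c):=(\beta_c-\omega_c)/x_c$, $w^*_1(c):=1$, $w^*_{n+1}(c):=\beta_cw^*_n(c)-x_cw^*_{n-1}(c)$ ($n\ge1$); $q^*_0(c):=-(1-y)(1+y+(1-c)^2r^2y^2z^2(1-y))/\tau_c^2$, $q^*_1(c):=y^2$, $q^*_{n+1}(c):=\beta_cq^*_n(c)-x_cq^*_{n-1}(c)$ ($n\ge1$). Also $\tau(a,b):=1+(1-a)(1-b)r^2z^2y(1-y)$, $x(a,b):=b^2z^2\tau(a,b)^2$, $x(b,a):=a^2z^2\tau(a,b)^2$, $\beta(a,b):=\beta_b-(b-a)b^2(1-b)r^2(1-y)^2z^4$, $\beta(b,a):=\beta_a-(a-b)a^2(1-a)r^2(1-y)^2z^4$. Downward array $\overline w_{n,m}$ ($0\le m<n$): $\overline w_{m+1,m}:=1$; for $n-m\ge2$: $\overline w_{m+\ell,m}:=w^*_\ell(a)$ if $m+\ell\le f-1$, $:=w^*_\ell(b)$ if $f-1\le m$; $\overline w_{f+j,f-2}:=\frac{1-a}{1-b}w^*_{j+2}(b)+\frac{a-b}{1-b}w^*_{j+1}(b)$ ($j\ge0$); $\overline w_{n,f-3}:=\beta(b,a)\overline w_{n,f-2}-x(b,a)\overline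 w_{n,f-1}$ ($n\ge f$); $\overline w_{n,f-\ell-2}:=\beta_a\overline w_{n,f-\ell-1}-x_a\overline w_{n,f-\ell}$ ($n\ge f$, $\ell\ge2$). The sequence $\overline q_n$, $n\ge1$: $\overline q_n:=q^*_n(a)$ for $1\le n<f$; $\overline q_f:=\frac{1-b}{1-a}q^*_f(a)+\frac{b-a}{1-a}q^*_{f-1}(a)$; $\overline q_{f+1}:=\beta(a,b)\overline q_f-x(a,b)\overline q_{f-1}$; $\overline q_{f+j+1}:=\beta_b\overline q_{f+j}-x_b\overline q_{f+j-1}$ for $j\ge1$. *)

(* Defs.v *)
(* r, y, z: the indeterminates, taken as (generic) elements of
   a real field R. *)
From HB Require Import structures.
From mathcomp Require Import all_boot all_order all_algebra.
Set Implicit Arguments. Unset Strict Implicit. Unset Printing Implicit Defensive.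
Import Order.TTheory GRing.Theory Num.Theory.
Local Open Scope ring_scope.

Section Defs.
Variables (R : realFieldType) (r y z : R).

Definition omega_c (c : R) : R := 1 - (1 - c) ^+ 2 * r ^+ 2 * y ^+ 2 * z ^+ 2.
Definition tau_c (c : R) : R := 1 + (1 - c) ^+ 2 * r ^+ 2 * z ^+ 2 * y * (1 - y).
Definition x_c (c : R) : R := c ^+ 2 * z ^+ 2 * tau_c c ^+ 2.
Definition beta_c (c : R) : R :=
  1 + z ^+ 2 * (c ^+ 2 - (1 - c) ^+ 2 * r ^+ 2 * (y ^+ 2 + c ^+ 2 * (1 - y) ^+ 2 * z ^+ 2)).

Fixpoint rec2 (beta x u0 u1 : R) (n : nat) : R * R :=
  match n with
  | 0%N => (u0, u1)
  | n'.+1 => let p := rec2 beta x u0 u1 n' in (p.2, beta * p.2 - x * p.1)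
  end.

Definition wstar (c : R) (n : nat) : R :=
  (rec2 (beta_c c) (x_c c) ((beta_c c - omega_c c) / x_c c) 1 n).1.

Definition qstar0 (c : R) : R :=
  - ((1 - y) * (1 + y + (1 - c) ^+ 2 * r ^+ 2 * y ^+ 2 * z ^+ 2 * (1 - y))) / tau_c c ^+ 2.

Definition qstar (c : R) (n : nat) : R :=
  (rec2 (beta_c c) (x_c c) (qstar0 c) (y ^+ 2) n).1.

Definition tau_ab (a b : R) : R := 1 + (1 - a) * (1 - b) * r ^+ 2 * z ^+ 2 * y * (1 - y).
Definition x_ab (a b : R) : R := b ^+ 2 * z ^+ 2 * tau_ab a b ^+ 2.
Definition x_ba (a b : R) : R := a ^+ 2 * z ^+ 2 * tau_ab a b ^+ 2.
Definition beta_ab (a b : R) : R :=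
  beta_c b - (b - a) * b ^+ 2 * (1 - b) * r ^+ 2 * (1 - y) ^+ 2 * z ^+ 4.
Definition beta_ba (a b : R) : R :=
  beta_c a - (a - b) * a ^+ 2 * (1 - a) * r ^+ 2 * (1 - y) ^+ 2 * z ^+ 4.

Variables (a b : R) (f : nat).

(* value \overline w_{n, f-2} for n >= f (j = n - f) *)
Definition wbar_fm2 (n : nat) : R :=
  (1 - a) / (1 - b) * wstar b (n - f + 2) + (a - b) / (1 - b) * wstar b (n - f + 1).

(* value \overline w_{n, f-1} for n >= f *)
Definition wbar_fm1 (n : nat) : R := if n == f then 1 else wstar b (n - (f - 1)).

(* downward column recursion, n >= f:
   wcol n k = (\overline w_{n, f-2-k}, \overline w_{n, f-1-k}) *)
Fixpoint wcol (n k : nat) : R * R :=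
  match k with
  | 0%N => (wbar_fm2 n, wbar_fm1 n)
  | 1%N => (beta_ba a b * wbar_fm2 n - x_ba a b * wbar_fm1 n, wbar_fm2 n)
  | k'.+1 => let p := wcol n k' in (beta_c a * p.1 - x_c a * p.2, p.1)
  end.

(* the downward array \overline w_{n,m}, meaningful for 0 <= m < n *)
Definition wbar (n m : nat) : R :=
  if n == m.+1 then 1
  else if (n <= f - 1)%N then wstar a (n - m)
  else if (f - 1 <= m)%N then wstar b (n - m)
  else (wcol n (f - 2 - m)).1.

Definition qbar_f : R :=
  (1 - b) / (1 - a) * qstar a f + (b - a) / (1 - a) * qstar a (f - 1).

(* qtail j = (\overline q_{f+j}, \overline q_{f+j-1}) *)
Fixpoint qtail (j : nat) : R * R :=
  match j with
  | 0%N => (qbar_f, qstar a (f - 1))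
  | 1%N => (beta_ab a b * qbar_f - x_ab a b * qstar a (f - 1), qbar_f)
  | j'.+1 => let p := qtail j' in (beta_c b * p.1 - x_c b * p.2, p.1)
  end.

(* \overline q_n, meaningful for n >= 1 *)
Definition qbar (n : nat) : R :=
  if (n < f)%N then qstar a n else (qtail (n - f)).1.

End Defs.

Definition bracket_star (R : realFieldType) (r y z c : R) (n : nat) : R :=
  wstar r y z c n * qstar r y z c n.+1 - qstar r y z c n * wstar r y z c n.+1.

Definition bracket_bar (R : realFieldType) (r y z a b : R) (f n : nat) : R :=
  wbar r y z a b f n 0 * qbar r y z a b f n.+1
  - qbar r y z a b f n * wbar r y z a b f n.+1 0.

(* Main.v *)
Require Import Defs.
From HB Require Import structures.
From mathcomp Require Import all_boot all_order all_algebra.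
From mathcomp Require Import ring zify.
Import Order.TTheory GRing.Theory Num.Theory.
Local Open Scope ring_scope.

Section H.
Variables (R : realFieldType) (r y z a b : R) (f : nat).

Lemma zero_rec (be xx : R) (D : nat -> R) : D 0%N = 0 -> D 1%N = 0 ->
  (forall k, D k.+2 = be * D k.+1 - xx * D k) -> forall k, D k = 0.
Proof.
move=> h0 h1 hr k.
suff: D k = 0 /\ D k.+1 = 0 by case.
elim: k => [|k [IH1 IH2]]; first by split.
by split => //; rewrite hr IH1 IH2 !mulr0 subr0.
Qed.

Lemma wstarSS c n : wstar r y z c n.+2 = beta_c r y z c * wstar r y z c n.+1 - x_c r y z c * wstar r y z c n.
Proof. by []. Qed.
Lemma qstarSS c n : qstar r y z c n.+2 = beta_c r y z c * qstar r y z c n.+1 - x_c r y z c * qstar r y z c n.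
Proof. by []. Qed.
Lemma wstar1 c : wstar r y z c 1 = 1. Proof. by []. Qed.
Lemma wstar2 c : x_c r y z c != 0 -> wstar r y z c 2 = omega_c r y z c.
Proof. move=> h; rewrite wstarSS wstar1 /wstar /=. field. exact h. Qed.
Lemma wstar3 c : x_c r y z c != 0 -> wstar r y z c 3 = beta_c r y z c * omega_c r y z c - x_c r y z c.
Proof. move=> h; rewrite wstarSS wstar2 // wstar1 mulr1. by []. Qed.

Lemma part1 : a != 0 -> z != 0 -> tau_c r y z a != 0 -> forall n, (1 <= n)%N ->
  bracket_star r y z a n = a ^+ 2 * z ^+ 2 * x_c r y z a ^+ n.-1.
Proof.
move=> ha hz ht n; case: n => // n _; elim: n => [|n IH].
  rewrite /bracket_star qstarSS wstarSS /= /qstar /wstar /= /qstar0 /x_c /omega_c /beta_c /tau_c.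
  rewrite /tau_c in ht. field. rewrite hz ha !andbT.
  move: ht; apply: contraNN => /eqP h; apply/eqP; rewrite -h; ring.
rewrite /bracket_star (qstarSS a n.+1) (wstarSS a n.+1) /=; rewrite /= in IH; transitivity (x_c r y z a * bracket_star r y z a n.+1); first by rewrite /bracket_star; ring.
rewrite IH (exprS _ n); set X := x_c r y z a ^+ n; ring.
Qed.

Notation V n k := (wcol r y z a b f n k).1.

Lemma wcolSS n k : wcol r y z a b f n k.+2 =
  (beta_c r y z a * (wcol r y z a b f n k.+1).1 - x_c r y z a * (wcol r y z a b f n k.+1).2,
   (wcol r y z a b f n k.+1).1).
Proof. by []. Qed.

Lemma wcol2 n k : (wcol r y z a b f n k.+1).2 = V n k.
Proof. by case: k. Qed.

Lemma VSS n k : V n k.+2 = beta_c r y z a * V n k.+1 - x_c r y z a * V n k.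
Proof. by rewrite wcolSS /= wcol2. Qed.

Lemma V1 n : V n 1 = beta_ba r y z a b * wbar_fm2 r y z a b f n - x_ba r y z a b * wbar_fm1 r y z b f n.
Proof. by []. Qed.
Lemma V0 n : V n 0 = wbar_fm2 r y z a b f n.
Proof. by []. Qed.

Lemma fm2E m : wbar_fm2 r y z a b f (f + m) =
  (1 - a) / (1 - b) * wstar r y z b m.+2 + (a - b) / (1 - b) * wstar r y z b m.+1.
Proof.
rewrite /wbar_fm2. have -> : (f + m - f + 2 = m.+2)%N by lia.
by have -> : (f + m - f + 1 = m.+1)%N by lia.
Qed.

Lemma fm1E m : (1 <= f)%N -> wbar_fm1 r y z b f (f + m) = wstar r y z b m.+1.
Proof.
move=> hf; rewrite /wbar_fm1; case: m => [|m]; first by rewrite addn0 eqxx.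
have -> : (f + m.+1 == f) = false by apply/negbTE; lia.
by have -> : (f + m.+1 - (f - 1) = m.+2)%N by lia.
Qed.

Lemma eq_of_sub0 (u v : R) : u - v = 0 -> u = v.
Proof. by move/eqP; rewrite subr_eq0 => /eqP. Qed.

Hypotheses (hf : (3 <= f)%N) (ha0 : a != 0) (hb0 : b != 0) (hz : z != 0)
  (hta : tau_c r y z a != 0) (htb : tau_c r y z b != 0) (ha1 : 1 - a != 0) (hb1 : 1 - b != 0).

Lemma xa0 : x_c r y z a != 0.
Proof. by rewrite /x_c !mulf_neq0 // expf_neq0. Qed.
Lemma xb0 : x_c r y z b != 0.
Proof. by rewrite /x_c !mulf_neq0 // expf_neq0. Qed.

Lemma colA k : V f k = (1 - b) / (1 - a) * wstar r y z a k.+2 + (b - a) / (1 - a) * wstar r y z a k.+1.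
Proof.
apply: eq_of_sub0; move: k.
apply: (zero_rec (beta_c r y z a) (x_c r y z a)).
- rewrite V0; have := fm2E 0; rewrite addn0 => ->; rewrite (wstar2 a xa0) (wstar2 b xb0) !wstar1.
  rewrite /omega_c. field. by rewrite ha1 hb1.
- have hf1 : (1 <= f)%N by lia.
  rewrite V1; have := fm1E 0 hf1; rewrite addn0 => ->.
  have := fm2E 0; rewrite addn0 => ->.
  rewrite (wstar3 a xa0) (wstar2 a xa0) (wstar2 b xb0) !wstar1.
  rewrite /omega_c /beta_ba /x_ba /beta_c /x_c /tau_ab /tau_c. field. by rewrite ha1 hb1.
- move=> k; rewrite VSS (wstarSS a k.+2) (wstarSS a k.+1); ring.
Qed.

Lemma rowAB k : V (f + 1) k = beta_ab r y z a b * V f k - x_ab r y z a b * wstar r y z a k.+1.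
Proof.
have hf1 : (1 <= f)%N by lia.
apply: eq_of_sub0; move: k.
apply: (zero_rec (beta_c r y z a) (x_c r y z a)).
- rewrite !V0 fm2E; have := fm2E 0; rewrite addn0 => ->.
  rewrite (wstar3 b xb0) (wstar2 b xb0) !wstar1.
  rewrite /omega_c /beta_ab /x_ab /beta_c /x_c /tau_ab /tau_c. field. by rewrite hb1.
- rewrite !V1 fm2E (fm1E 1 hf1); have := fm1E 0 hf1; rewrite addn0 => ->.
  have := fm2E 0; rewrite addn0 => ->.
  rewrite (wstar3 b xb0) (wstar2 a xa0) (wstar2 b xb0) !wstar1.
  rewrite /omega_c /beta_ba /x_ba /beta_ab /x_ab /beta_c /x_c /tau_ab /tau_c. field. by rewrite hb1.
- move=> k; rewrite !VSS (wstarSS a k.+1); ring.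
Qed.

Lemma rowB i k : V (f + i.+2) k = beta_c r y z b * V (f + i.+1) k - x_c r y z b * V (f + i) k.
Proof.
have hf1 : (1 <= f)%N by lia.
apply: eq_of_sub0; move: k.
apply: (zero_rec (beta_c r y z a) (x_c r y z a)).
- rewrite !V0 !fm2E (wstarSS b i.+2) (wstarSS b i.+1); ring.
- rewrite !V1 !fm2E !fm1E // (wstarSS b i.+2) (wstarSS b i.+1) (wstarSS b i); ring.
- move=> k; rewrite !VSS; ring.
Qed.

Notation W n := (wbar r y z a b f n 0).
Notation Q n := (qbar r y z a b f n).

Lemma W_low n : (1 <= n)%N -> (n <= f - 1)%N -> W n = wstar r y z a n.
Proof.
move=> h1 h2; rewrite /wbar h2 subn0; case: eqP => // ->; by [].
Qed.

Lemma W_high m : W (f + m) = V (f + m) (f - 2).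
Proof.
rewrite /wbar !subn0.
have -> : (f + m == 1) = false by apply/negbTE; lia.
have -> : (f + m <= f - 1)%N = false by apply/negbTE; lia.
by have -> : (f - 1 <= 0)%N = false by apply/negbTE; lia.
Qed.

Lemma Q_low n : (n < f)%N -> Q n = qstar r y z a n.
Proof. by move=> h; rewrite /qbar h. Qed.

Lemma Q_high m : Q (f + m) = (qtail r y z a b f m).1.
Proof.
rewrite /qbar; have -> : (f + m < f)%N = false by apply/negbTE; lia.
by rewrite addKn.
Qed.

Lemma qtail2 j : (qtail r y z a b f j.+1).2 = (qtail r y z a b f j).1.
Proof. by case: j. Qed.

Lemma qtailSS j : (qtail r y z a b f j.+2).1 =
  beta_c r y z b * (qtail r y z a b f j.+1).1 - x_c r y z b * (qtail r y z a b f j).1.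
Proof. by rewrite -(qtail2 j). Qed.

Lemma qtail1 : (qtail r y z a b f 1).1 =
  beta_ab r y z a b * qbar_f r y z a b f - x_ab r y z a b * qstar r y z a (f - 1).
Proof. by []. Qed.
Lemma qtail0 : (qtail r y z a b f 0).1 = qbar_f r y z a b f.
Proof. by []. Qed.

Lemma Wf : W f = (1 - b) / (1 - a) * wstar r y z a f + (b - a) / (1 - a) * wstar r y z a (f - 1).
Proof.
have := W_high 0; rewrite addn0 => ->; rewrite colA.
have -> : (f - 2).+2 = f by lia.
by have -> : (f - 2).+1 = (f - 1)%N by lia.
Qed.

Lemma part2 : bracket_bar r y z a b f (f - 1) = (1 - b) / (1 - a) * bracket_star r y z a (f - 1).
Proof.
rewrite /bracket_bar.
have -> : (f - 1).+1 = f by lia.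
rewrite Wf W_low; [|lia|lia]. rewrite (Q_low (f - 1)); last lia.
have := Q_high 0; rewrite addn0 => ->.
rewrite /= /qbar_f /bracket_star.
have -> : (f - 1).+1 = f by lia.
ring.
Qed.

Lemma part3 i : bracket_bar r y z a b f (f + i) =
  x_ab r y z a b * x_c r y z b ^+ i * bracket_bar r y z a b f (f - 1).
Proof.
elim: i => [|i IH].
  rewrite addn0 /bracket_bar.
  have -> : (f - 1).+1 = f by lia.
  rewrite -addn1 (W_high 1) rowAB (Q_high 1).
  have := W_high 0; rewrite addn0 => <-.
  have := Q_high 0; rewrite addn0 => ->.
  rewrite (W_low (f - 1)); [|lia|lia]. rewrite (Q_low (f - 1)); last lia.
  have -> : (f - 2).+1 = (f - 1)%N by lia.
  rewrite qtail1 qtail0 expr0. ring.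
rewrite exprS.
transitivity (x_c r y z b * bracket_bar r y z a b f (f + i)); last by rewrite IH; ring.
rewrite /bracket_bar -!addnS.
rewrite (W_high i.+2) rowB -(W_high i.+1) -(W_high i).
rewrite (Q_high i.+2) qtailSS -(Q_high i.+1) -(Q_high i).
ring.
Qed.
End H.

Theorem lemma4 (R : realFieldType) (r y z a b : R) (f : nat) :
  0 < a -> a < 1 -> 0 < b -> b < 1 -> (3 <= f)%N ->
  z != 0 -> tau_c r y z a != 0 -> tau_c r y z b != 0 ->
  [/\ (forall n : nat, (1 <= n)%N ->
         bracket_star r y z a n = a ^+ 2 * z ^+ 2 * x_c r y z a ^+ n.-1),
      bracket_bar r y z a b f (f - 1) = (1 - b) / (1 - a) * bracket_star r y z a (f - 1)
      /\ bracket_bar r y z a b f (f - 1)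
         = (1 - b) / (1 - a) * (a ^+ 2 * z ^+ 2 * x_c r y z a ^+ (f - 2)) &
      (forall j : nat, (1 <= j)%N ->
         bracket_bar r y z a b f (f + j - 1)
         = (1 - b) / (1 - a) * a ^+ 2 * z ^+ 2 * x_c r y z a ^+ (f - 2)
           * x_ab r y z a b * x_c r y z b ^+ j.-1)].
Proof.
move=> ha ha' hb hb' hf hz hta htb.
have ha0 : a != 0 by rewrite (gt_eqF ha).
have hb0 : b != 0 by rewrite (gt_eqF hb).
have ha1 : 1 - a != 0 by rewrite subr_eq0 eq_sym (lt_eqF ha').
have hb1 : 1 - b != 0 by rewrite subr_eq0 eq_sym (lt_eqF hb').
have P1 := @part1 R r y z a ha0 hz hta.
have P2 := @part2 R r y z a b f hf ha0 hb0 hz hta htb ha1 hb1.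
have E : bracket_star r y z a (f - 1) = a ^+ 2 * z ^+ 2 * x_c r y z a ^+ (f - 2).
  rewrite P1; last lia. by have -> : (f - 1).-1 = (f - 2)%N by lia.
split.
- exact: P1.
- by rewrite P2 E.
- case=> // i _.
  have -> : (f + i.+1 - 1 = f + i)%N by lia.
  rewrite (@part3 R r y z a b f hf ha0 hb0 hz hta htb ha1 hb1) P2 E /=. ring.
Qed.
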